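(* Let $q \geq 5$ be a prime power and let $\mathcal{X}$ be a plane curve of degree $q-1$ defined over $\mathbb{F}_q$ without $\mathbb{F}_q$-linear components with $\mathrm{N}_q(\mathcal{X}) = (q-1)^2$. Then $k_0 \leq q-4$.
   Context: $\mathcal{X}(\mathbb{F}_q)=\mathcal{X}\cap\mathbb{P}^2(\mathbb{F}_q)$, $\mathrm{N}_q(\mathcal{X})=\#\mathcal{X}(\mathbb{F}_q)$; ''without $\mathbb{F}_q$-linear components'' means no line defined over $\mathbb{F}_q$ is a component. For $0\le i\le q+1$, $a_i$ is the number of $\mathbb{F}_q$-lines $l$ with $\#(l\cap\mathcal{X}(\mathbb{F}_q))=i$, and $k_0 := \min\{i : a_i \neq 0\}$. *)

(* Defs.v *)
From HB Require Import structures.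
From mathcomp Require Import all_boot all_order all_algebra.
From mathcomp Require Import mpoly.
Set Implicit Arguments. Unset Strict Implicit. Unset Printing Implicit Defensive.
Import Order.TTheory GRing.Theory.
Local Open Scope ring_scope.

(* Points of P^2(F_q) (and F_q-lines, via their coefficient vectors) are
   represented by their normalized homogeneous coordinates: nonzero vectors
   of F^3 whose first nonzero coordinate equals 1. *)
Definition normalized (F : finFieldType) (v : {ffun 'I_3 -> F}) : bool :=
  [exists i : 'I_3, (v i == 1) && [forall j : 'I_3, (j < i)%N ==> (v j == 0)]].

Definition linform (F : finFieldType) (c : {ffun 'I_3 -> F}) : {mpoly F[3]} :=
  \sum_(i < 3) c i *: 'X_i.

Definition curve_pts (F : finFieldType) (P : {mpoly F[3]}) : {set {ffun 'I_3 -> F}} :=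
  [set v | normalized v & P.@[fun i => v i] == 0].

Definition Nq (F : finFieldType) (P : {mpoly F[3]}) : nat := #|curve_pts P|.

Definition line_count (F : finFieldType) (P : {mpoly F[3]}) (c : {ffun 'I_3 -> F}) : nat :=
  #|[set v in curve_pts P | \sum_(i < 3) c i * v i == 0]|.

Definition a_count (F : finFieldType) (P : {mpoly F[3]}) (i : nat) : nat :=
  #|[set c | normalized c & line_count P c == i]|.

Definition k0 (F : finFieldType) (P : {mpoly F[3]}) : nat :=
  find (fun i => a_count P i != 0%N) (iota 0 (#|F|.+2)).

Definition no_Fq_linear_components (F : finFieldType) (P : {mpoly F[3]}) : Prop :=
  forall c : {ffun 'I_3 -> F}, c != 0 -> ~ (exists G : {mpoly F[3]}, P = linform c * G).

(* Main.v *)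
Require Import Defs.
From HB Require Import structures.
From mathcomp Require Import all_boot all_order all_algebra.
From mathcomp Require Import mpoly.
From mathcomp Require Import zify ring.
Set Implicit Arguments. Unset Strict Implicit. Unset Printing Implicit Defensive.
Import Order.TTheory GRing.Theory.
Local Open Scope ring_scope.


Section Ideal.
Variable R : comRingType.
Variable L : R.
Definition dv (x : R) := exists G, x = L * G.
Lemma dv0 : dv 0. Proof. by exists 0; rewrite mulr0. Qed.
Lemma dvD x y : dv x -> dv y -> dv (x + y).
Proof. by move=> [g ->] [h ->]; exists (g + h); rewrite mulrDr. Qed.
Lemma dvMl x y : dv y -> dv (x * y).
Proof. by move=> [h ->]; exists (x * h); rewrite mulrCA. Qed.
Lemma dvMr x y : dv x -> dv (x * y).
Proof. by move=> [h ->]; exists (h * y); rewrite mulrA. Qed.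
Lemma dv_prod_diff (I : Type) (r : seq I) (P : pred I) (a b : I -> R) :
  (forall i, P i -> dv (a i - b i)) ->
  dv (\prod_(i <- r | P i) a i - \prod_(i <- r | P i) b i).
Proof.
move=> H; apply: (big_rec2 (fun y1 y2 => dv (y1 - y2))); first by rewrite subrr; exact: dv0.
move=> i y1 y2 Pi Hy.
have -> : a i * y1 - b i * y2 = (a i - b i) * y1 + b i * (y1 - y2) by ring.
by apply: dvD; [apply: dvMr; apply: H | apply: dvMl].
Qed.
Lemma dv_exp_diff a b e : dv (a - b) -> dv (a ^+ e - b ^+ e).
Proof.
move=> H; elim: e => [|e IH]; first by rewrite !expr0 subrr; exact: dv0.
have -> : a ^+ e.+1 - b ^+ e.+1 = (a - b) * a ^+ e + b * (a ^+ e - b ^+ e) by rewrite !exprS; ring.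
by apply: dvD; [apply: dvMr | apply: dvMl].
Qed.
End Ideal.


Lemma big3 (R : Type) (idx : R) (op : Monoid.com_law idx) (k : 'I_3) (g : 'I_3 -> R) :
  \big[op/idx]_(i < 3) g i = op (g k) (op (g (lift k ord0)) (g (lift k ord_max))).
Proof.
rewrite (bigD1_ord k) //= big_ord_recl big_ord1.
by congr (op _ (op _ (g (lift k _)))); apply: val_inj.
Qed.

Section Alg.
Variable F : finFieldType.
Definition la (k : 'I_3) : 'I_3 := lift k ord0.
Definition lb (k : 'I_3) : 'I_3 := lift k ord_max.

Definition tsub (c : {ffun 'I_3 -> F}) (k : 'I_3) : 3.-tuple {mpoly F[3]} :=
  [tuple if i == k then - (c (la k) *: 'X_(la k) + c (lb k) *: 'X_(lb k)) else 'X_i | i < 3].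

Lemma linform3 (c : {ffun 'I_3 -> F}) (k : 'I_3) : linform c = c k *: 'X_k + (c (la k) *: 'X_(la k) + c (lb k) *: 'X_(lb k)).
Proof. by rewrite /linform (big3 _ k). Qed.

Lemma divD (c : {ffun 'I_3 -> F}) k (p : {mpoly F[3]}) : c k = 1 ->
  dv (linform c) (p - (p \mPo tsub c k)).
Proof.
move=> ck.
have HX i : dv (linform c) ('X_i - tnth (tsub c k) i).
  rewrite tnth_mktuple; case: eqP => [->|_]; last by rewrite subrr; exact: dv0.
  by exists 1; rewrite mulr1 (linform3 c k) ck scale1r opprK.
have -> : p - (p \mPo tsub c k) = \sum_(m <- msupp p) p@_m *: ('X_[m] - ('X_[m] \mPo tsub c k)).
  rewrite comp_mpolyEX [X in X - _]mpolyE -sumrB; apply: eq_bigr => m _; by rewrite scalerBr.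
apply: big_ind; [exact: dv0 | by move=> x y; apply: dvD | move=> m _].
rewrite comp_mpolyX mpolyXE_id.
have [G ->] := @dv_prod_diff _ (linform c) _ (index_enum 'I_3) xpredT (fun i => 'X_i ^+ m i) (fun i => tnth (tsub c k) i ^+ m i)
  (fun i _ => dv_exp_diff (m i) (HX i)).
by exists (p@_m *: G); rewrite scalerAr.
Qed.
End Alg.


Section Good.
Variable F : finFieldType.
Variable k : 'I_3.
Definition goodk (p : {mpoly F[3]}) := all (fun m : 'X_{1..3} => m k == 0%N) (msupp p).

Lemma good0 : goodk 0.
Proof. by rewrite /goodk msupp0. Qed.
Lemma good1 : goodk 1.
Proof. by rewrite /goodk msupp1 /= mnm0E. Qed.
Lemma goodD p q : goodk p -> goodk q -> goodk (p + q).
Proof.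
move=> /allP Hp /allP Hq; apply/allP => m /msuppD_le; rewrite mem_cat => /orP[/Hp|/Hq] //.
Qed.
Lemma goodZ a p : goodk p -> goodk (a *: p).
Proof. by move=> /allP Hp; apply/allP => m /msuppZ_le /Hp. Qed.
Lemma goodM p q : goodk p -> goodk q -> goodk (p * q).
Proof.
move=> /allP Hp /allP Hq; apply/allP => m /msuppM_le /allpairsP [[m1 m2] /= [/Hp /eqP h1 /Hq /eqP h2 ->]].
by rewrite mnmDE h1 h2.
Qed.
Lemma goodX i : i != k -> goodk 'X_i.
Proof. by move=> ik; rewrite /goodk msuppX /= mnm1E (negbTE ik). Qed.
Lemma goodN p : goodk p -> goodk (- p).
Proof. by move=> h; rewrite -scaleN1r; apply: goodZ. Qed.
Lemma goodXn p e : goodk p -> goodk (p ^+ e).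
Proof. by move=> h; elim: e => [|e IH]; [rewrite expr0; exact: good1 | rewrite exprS; apply: goodM]. Qed.

Lemma good_comp (p : {mpoly F[3]}) (t : 3.-tuple {mpoly F[3]}) :
  (forall i, goodk (tnth t i)) -> goodk (p \mPo t).
Proof.
move=> Ht; rewrite comp_mpolyE; apply: (big_ind goodk); [exact: good0| exact: goodD| move=> m _].
apply: goodZ; apply: (big_ind goodk); [exact: good1| exact: goodM| move=> i _; exact: goodXn].
Qed.

Lemma homog_comp d (p : {mpoly F[3]}) (t : 3.-tuple {mpoly F[3]}) :
  (forall i, tnth t i \is 1.-homog) -> p \is d.-homog -> (p \mPo t) \is d.-homog.
Proof.
move=> Ht Hp; rewrite comp_mpolyE big_seq; apply: rpred_sum => m Hm; apply: rpredZ.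
have <- : mdeg m = d by apply: (dhomog_mf Hp).
rewrite mdegE.
apply: (big_rec2 (fun (y : {mpoly F[3]}) (e : nat) => y \is e.-homog)); first exact: dhomog1.
move=> i y e _ Hy; apply: dhomogM => //.
by have := dhomogMn (m i) (Ht i); rewrite mul1n.
Qed.
End Good.

Section Sub.
Variable F : finFieldType.
Lemma tsub_good (c : {ffun 'I_3 -> F}) k i : goodk k (tnth (tsub c k) i).
Proof.
rewrite tnth_mktuple; case: eqP => [_|/eqP ik]; last exact: goodX.
apply/goodN/goodD; apply/goodZ/goodX; rewrite eq_sym; exact: neq_lift.
Qed.
Lemma tsub_homog (c : {ffun 'I_3 -> F}) k i : tnth (tsub c k) i \is 1.-homog.
Proof.
have hX j : ('X_j : {mpoly F[3]}) \is 1.-homog.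
  by rewrite dhomogX; apply/eqP; apply: mdeg1.
rewrite /tsub tnth_mktuple; case: eqP => _ //.
by rewrite rpredN rpredD // rpredZ.
Qed.
End Sub.


Lemma cover3 (k i : 'I_3) : [\/ i = k, i = la k | i = lb k].
Proof.
case: (unliftP k i) => [j ->|->]; last by constructor 1.
case: j => [[|[|//]]] Hj.
- by constructor 2; rewrite /la; congr lift; apply: val_inj.
- by constructor 3; rewrite /lb; congr lift; apply: val_inj.
Qed.

Lemma la_k k : (la k == k) = false.
Proof. by apply/negbTE; rewrite eq_sym; exact: neq_lift. Qed.
Lemma lb_k k : (lb k == k) = false.
Proof. by apply/negbTE; rewrite eq_sym; exact: neq_lift. Qed.
Lemma la_lb k : (la k == lb k) = false.
Proof. by apply/negbTE; apply/eqP => /lift_inj. Qed.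

Lemma sum3n (k : 'I_3) (g : 'I_3 -> nat) : (\sum_(i < 3) g i = g k + g (la k) + g (lb k))%N.
Proof. by rewrite (big3 _ k) /= addnA. Qed.

Section Form.
Variable F : finFieldType.
Variable k : 'I_3.
Variable d : nat.
Local Notation a := (la k).
Local Notation b := (lb k).
Definition mon (j : nat) : 'X_{1..3} := (U_(a) *+ j + U_(b) *+ (d - j))%MM.

Lemma monE j i : mon j i = ((a == i) * j + (b == i) * (d - j))%N.
Proof. by rewrite /mon mnmDE !mulmnE !mnm1E mulnC [X in (_ + X)%N]mulnC. Qed.

Lemma mon_a j : mon j a = j.
Proof. by rewrite monE eqxx eq_sym la_lb; lia. Qed.

Lemma Rform (R : {mpoly F[3]}) : goodk k R -> R \is d.-homog ->
  R = \sum_(j < d.+1) R@_(mon j) *: 'X_[mon j].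
Proof.
move=> /allP Hg Hh; apply/mpolyP => m'.
rewrite raddf_sum /=.
under eq_bigr => j _ do rewrite mcoeffZ mcoeffX.
case: (boolP (m' \in msupp R)) => Hm; last first.
  rewrite (memN_msupp_eq0 Hm) big1 // => j _.
  by case: eqP => [->|_]; rewrite ?(memN_msupp_eq0 Hm) ?mulr0 ?mul0r.
have mk : m' k = 0%N by apply/eqP; exact: Hg.
have md : mdeg m' = d by exact: (dhomog_mf Hh).
have mad : (m' a < d.+1)%N.
  by rewrite ltnS -md mdegE (sum3n k); lia.
have Hmon : mon (m' a) = m'.
  apply/mnmP => i; rewrite monE; case: (cover3 k i) => ->.
  - by rewrite la_k lb_k mk.
  - by rewrite eqxx eq_sym la_lb; lia.
  - rewrite la_lb eqxx; move: md; rewrite mdegE (sum3n k); lia.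
rewrite (bigD1 (Ordinal mad)) //= Hmon eqxx mulr1 big1 ?addr0 // => j Hj.
case: eqP => [Hmj|_]; last by rewrite mulr0.
exfalso; move/negP: Hj; apply; apply/eqP/val_inj => /=.
by rewrite -Hmj mon_a.
Qed.

Lemma eval_mon (v : 'I_3 -> F) j : meval v 'X_[mon j] = v a ^+ j * v b ^+ (d - j).
Proof.
rewrite mevalX (big3 _ k) /= !monE la_k lb_k eqxx la_lb eq_sym la_lb /=.
rewrite -/(lb k) eqxx !mul0n !mul1n add0n addn0 expr0 mul1r.
by [].
Qed.
End Form.


Section Lin.
Variable F : finFieldType.
Implicit Types v w c : {ffun 'I_3 -> F}.

Lemma sum3r k (g : 'I_3 -> F) : \sum_(i < 3) g i = g k + g (la k) + g (lb k).
Proof. by rewrite (big3 _ k) /= addrA. Qed.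

Lemma normalized_pivot v : normalized v ->
  exists i : 'I_3, v i = 1 /\ forall j : 'I_3, (j < i)%N -> v j = 0.
Proof.
case/existsP => i /andP[/eqP vi /forallP H]; exists i; split => // j ji.
by move: (H j); rewrite ji => /eqP.
Qed.

Lemma normalized_neq0 v : normalized v -> v != 0.
Proof.
case/normalized_pivot => i [vi _]; apply/eqP => v0; move: vi; rewrite v0 ffunE.
by move/eqP; rewrite eq_sym oner_eq0.
Qed.

Lemma prop_eq v w (mu : F) : normalized v -> normalized w ->
  (forall i, w i = mu * v i) -> v = w.
Proof.
case/normalized_pivot => i [vi Hv]; case/normalized_pivot => i' [wi' Hw] H.
case: (ltngtP i i') => [ii'|i'i|/val_inj ii'].
- have := Hw _ ii'; rewrite H vi mulr1 => mu0.
  by move: wi'; rewrite H mu0 mul0r => /eqP; rewrite eq_sym oner_eq0.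
- by move: wi'; rewrite H (Hv _ i'i) mulr0 => /eqP; rewrite eq_sym oner_eq0.
- have mu1 : mu = 1 by move: wi'; rewrite -ii' H vi mulr1.
  by apply/ffunP => j; rewrite H mu1 mul1r.
Qed.

Variable c : {ffun 'I_3 -> F}.
Variable k : 'I_3.
Hypothesis ck : c k = 1.
Local Notation a := (la k).
Local Notation b := (lb k).

Lemma line_k v : \sum_(i < 3) c i * v i = 0 -> v k = - (c a * v a + c b * v b).
Proof.
rewrite (sum3r k) ck mul1r => /eqP; rewrite -addrA addr_eq0 => /eqP ->.
by [].
Qed.

Lemma line_prop v w (mu : F) : \sum_(i < 3) c i * v i = 0 -> \sum_(i < 3) c i * w i = 0 ->
  w a = mu * v a -> w b = mu * v b -> forall i, w i = mu * v i.
Proof.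
move=> /line_k Hv /line_k Hw Ha Hb i; case: (cover3 k i) => -> //.
by rewrite Hv Hw Ha Hb; ring.
Qed.

Lemma inj1 v w : normalized v -> normalized w ->
  \sum_(i < 3) c i * v i = 0 -> \sum_(i < 3) c i * w i = 0 ->
  v b != 0 -> w b != 0 -> v a / v b = w a / w b -> v = w.
Proof.
move=> nv nw lv lw vb wb E; apply: (prop_eq (mu := w b / v b)) => //.
apply: line_prop => //; last by rewrite mulrVK ?unitfE.
have -> : w a = w b * (w a / w b) by rewrite mulrC mulrVK ?unitfE.
rewrite -E; field; exact: vb.
Qed.

Lemma va_neq0 v : normalized v -> \sum_(i < 3) c i * v i = 0 -> v b = 0 -> v a != 0.
Proof.
move=> nv lv vb; apply/eqP => va; move: (normalized_neq0 nv); apply/negP; rewrite negbK.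
apply/eqP/ffunP => i; rewrite ffunE; case: (cover3 k i) => -> //.
by rewrite (line_k lv) va vb !mulr0 addr0 oppr0.
Qed.

Lemma inj0 v w : normalized v -> normalized w ->
  \sum_(i < 3) c i * v i = 0 -> \sum_(i < 3) c i * w i = 0 ->
  v b = 0 -> w b = 0 -> v = w.
Proof.
move=> nv nw lv lw vb wb; have va := va_neq0 nv lv vb.
apply: (prop_eq (mu := w a / v a)) => //.
apply: line_prop => //; first by rewrite mulrVK ?unitfE.
by rewrite vb wb mulr0.
Qed.

Definition Bset := [set v : {ffun 'I_3 -> F} | v b != 0].

Lemma line_split (S : {set {ffun 'I_3 -> F}}) :
  (forall v, v \in S -> normalized v /\ \sum_(i < 3) c i * v i = 0) ->
  #|S| = (#|(fun v : {ffun 'I_3 -> F} => v a / v b) @: (S :&: Bset)| + #|S :\: Bset|)%N /\ (#|S :\: Bset| <= 1)%N.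
Proof.
move=> HS; split.
  rewrite -(cardsID Bset S) card_in_imset // => v w.
  rewrite !inE => /andP[vS vB] /andP[wS wB].
  have [nv lv] := HS _ vS; have [nw lw] := HS _ wS.
  exact: inj1.
apply/card_le1_eqP => v w; rewrite !inE !negbK => /andP[/eqP vB vS] /andP[/eqP wB wS].
have [nv lv] := HS _ vS; have [nw lw] := HS _ wS.
by apply/esym; apply: inj0.
Qed.
End Lin.


Section Key.
Variable F : finFieldType.

Lemma eval_linform (c : {ffun 'I_3 -> F}) (v : 'I_3 -> F) :
  (linform c).@[v] = \sum_(i < 3) c i * v i.
Proof. by rewrite /linform raddf_sum /=; apply: eq_bigr => i _; rewrite mevalZ mevalXU. Qed.

Lemma key (P : {mpoly F[3]}) (d : nat) : P \is d.-homog -> no_Fq_linear_components P ->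
  forall c, normalized c -> (line_count P c <= d)%N.
Proof.
move=> Hh Hnl c nc.
have [k [ck _]] := normalized_pivot nc.
set R := P \mPo tsub c k.
have [G HG] := divD P ck.
have HR := Rform (good_comp P (tsub_good c k)) (homog_comp (tsub_homog c k) Hh).
rewrite -/R in HR.
set r := fun j => R@_(mon k d j).
have Heval : forall v : {ffun 'I_3 -> F}, \sum_(i < 3) c i * v i = 0 ->
    P.@[fun i => v i] = \sum_(j < d.+1) r j * (v (la k) ^+ j * v (lb k) ^+ (d - j)).
  move=> v lv.
  have -> : P = linform c * G + R by rewrite -HG subrK.
  rewrite mevalD mevalM eval_linform lv mul0r add0r HR raddf_sum /=.
  by apply: eq_bigr => j _; rewrite mevalZ eval_mon.
case: (boolP [forall j : 'I_d.+1, r j == 0]) => Hr.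
  exfalso; apply: (Hnl c (normalized_neq0 nc)); exists G.
  have R0 : R = 0 by rewrite HR big1 // => j _; have := eqP (forallP Hr j); rewrite /r => ->; rewrite scale0r.
  by rewrite -HG -/R R0 subr0.
set f := \poly_(j < d.+1) r j.
have fneq0 : f != 0.
  move: Hr; rewrite negb_forall => /existsP [j Hj]; apply/eqP => f0.
  have : f`_j = r j by rewrite /f coef_poly ltn_ord.
  by rewrite f0 coef0 => E; move: Hj; rewrite -E eqxx.
have Hhorn x : f.[x] = \sum_(j < d.+1) r j * x ^+ j by rewrite horner_poly.
set S := [set v in curve_pts P | \sum_(i < 3) c i * v i == 0].
have HS : forall v, v \in S -> normalized v /\ \sum_(i < 3) c i * v i = 0.
  by move=> v; rewrite !inE => /andP[/andP[nv _] /eqP lv].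
have Pv0 : forall v, v \in S -> P.@[fun i => v i] = 0.
  by move=> v; rewrite !inE => /andP[/andP[_ /eqP ->] _].
have [Hsplit H0] := line_split ck HS.
have Himg : (fun v : {ffun 'I_3 -> F} => v (la k) / v (lb k)) @: (S :&: Bset F k) \subset [set x | root f x].
  apply/subsetP => x /imsetP [v]; rewrite in_setI => /andP[vS]; move=> vb ->; move: vb; rewrite /Bset inE => vb.
  rewrite ?inE; apply/rootP; rewrite Hhorn.
  have := Pv0 _ vS; rewrite (Heval _ (HS _ vS).2).
  have -> : \sum_(j < d.+1) r j * (v (la k) ^+ j * v (lb k) ^+ (d - j)) =
            v (lb k) ^+ d * \sum_(j < d.+1) r j * (v (la k) / v (lb k)) ^+ j.
    rewrite big_distrr; apply: eq_bigr => j _.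
    have jd : (j <= d)%N by rewrite -ltnS ltn_ord.
    have -> : v (lb k) ^+ d = v (lb k) ^+ (d - j) * v (lb k) ^+ j by rewrite -exprD subnK.
    rewrite expr_div_n.
    have : v (lb k) ^+ j != 0 by apply: expf_neq0.
    move: (v (lb k) ^+ j) (v (lb k) ^+ (d - j)) (v (la k) ^+ j) (r j) => z y x0 rr zn.
    by rewrite /=; field.
  by move/eqP; rewrite mulf_eq0 expf_eq0 (negbTE vb) andbF /= => /eqP.
have Hroots : (#|[set x | root f x]| < size f)%N.
  rewrite cardE; apply: max_poly_roots => //; last exact: enum_uniq.
  by apply/allP => x; rewrite mem_enum inE.
have Hsz : (size f <= d.+1)%N by exact: size_poly.
have Himc := subset_leq_card Himg.
rewrite /line_count -/S Hsplit.
case: (boolP (r d == 0)) => Hrd.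
  have Hsz' : (size f <= d)%N.
    rewrite leqNgt; apply/negP => Hlt.
    have Es : size f = d.+1 by apply/eqP; rewrite eqn_leq Hsz Hlt.
    move: fneq0; rewrite -lead_coef_eq0 /lead_coef Es /= /f coef_poly ltnSn.
    by rewrite Hrd.
  lia.
have E0 : #|S :\: Bset F k| = 0%N.
  apply: eq_card0 => v; apply/negbTE/negP; rewrite in_setD => /andP[vb vS]; move: vb; rewrite /Bset in_set negbK => /eqP vb.
  have := Pv0 _ vS; rewrite (Heval _ (HS _ vS).2) big_ord_recr /= subnn expr0 mulr1 big1.
    rewrite add0r => /eqP; rewrite mulf_eq0 (negbTE Hrd) /= expf_eq0.
    have vna := va_neq0 ck (HS _ vS).1 (HS _ vS).2 vb.
    by move=> /andP[_ H]; rewrite H in vna.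
  move=> j _; rewrite vb expr0n.
  have -> : (d - j == 0)%N = false by move: (ltn_ord j); lia.
  by rewrite mulr0 mulr0.
lia.
Qed.
End Key.


Section Count.
Variable F : finFieldType.
Implicit Types u v w c : {ffun 'I_3 -> F}.

Definition i0 : 'I_3 := ord0.
Definition i1 : 'I_3 := lift ord0 ord0.
Definition i2 : 'I_3 := ord_max.

Lemma ord3P (P : 'I_3 -> Prop) : P i0 -> P i1 -> P i2 -> forall i, P i.
Proof.
move=> H0 H1 H2 [[|[|[|//]]] Hi].
- by have -> : Ordinal Hi = i0 by apply: val_inj.
- by have -> : Ordinal Hi = i1 by apply: val_inj.
- by have -> : Ordinal Hi = i2 by apply: val_inj.
Qed.

Lemma norm_exists u : u != 0 -> exists c, normalized c /\ exists mu : F, forall i, c i = mu * u i.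
Proof.
move=> un0.
case: (eqVneq (u i0) 0) => [u0|u0].
  case: (eqVneq (u i1) 0) => [u1|u1].
    case: (eqVneq (u i2) 0) => [u2|u2].
      have u00 : u = 0 by apply/ffunP; apply: ord3P; rewrite ffunE.
      by rewrite u00 eqxx in un0.
    exists [ffun i => (u i2)^-1 * u i]; split; last by exists (u i2)^-1 => i; rewrite ffunE.
    apply/existsP; exists i2; rewrite ffunE mulVf // eqxx /=.
    apply/forallP; apply: ord3P; rewrite ffunE //= ?u0 ?u1 mulr0 eqxx //.
  exists [ffun i => (u i1)^-1 * u i]; split; last by exists (u i1)^-1 => i; rewrite ffunE.
  apply/existsP; exists i1; rewrite ffunE mulVf // eqxx /=.
  by apply/forallP; apply: ord3P; rewrite ffunE //= ?u0 mulr0 eqxx.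
exists [ffun i => (u i0)^-1 * u i]; split; last by exists (u i0)^-1 => i; rewrite ffunE.
apply/existsP; exists i0; rewrite ffunE mulVf // eqxx /=.
by apply/forallP; apply: ord3P.
Qed.

Lemma line_through v w : exists c, normalized c /\
  \sum_(i < 3) c i * v i = 0 /\ \sum_(i < 3) c i * w i = 0.
Proof.
pose A : 'M[F]_(3, 2) := \matrix_(i, j) (if j == ord0 then v i else w i).
pose K := kermx A.
have Kn0 : K != 0.
  rewrite -mxrank_eq0 /K mxrank_ker.
  by have := rank_leq_col A; lia.
have : [exists i, row i K != 0].
  rewrite -negb_forall; apply: contra Kn0 => /forallP H.
  by apply/eqP/row_matrixP => i; rewrite row0; move/eqP: (H i).
case/existsP => i ri.
pose u := [ffun l => row i K 0 l].
have uA : row i K *m A = 0 by rewrite -row_mul mulmx_ker row0.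
have un0 : u != 0.
  move: ri; apply: contra => /eqP u0; apply/eqP/rowP => l.
  have := congr1 (fun f : {ffun 'I_3 -> F} => f l) u0; by rewrite !ffunE !mxE.
have [c [nc [mu Hc]]] := norm_exists un0.
have Hs (j : 'I_2) : \sum_(l < 3) u l * A l j = 0.
  have H := congr1 (fun M : 'M_(1, 2) => M 0 j) uA; simpl in H.
  rewrite mxE [X in _ = X]mxE in H.
  apply: etrans H; apply: eq_bigr => l _; by rewrite ffunE.
exists c; split => //; split.
  have := Hs ord0; under eq_bigr => l _ do rewrite mxE eqxx.
  move=> H; rewrite (eq_bigr (fun l => mu * (u l * v l))); last by move=> l _; rewrite Hc mulrA.
  by rewrite -mulr_sumr H mulr0.
have := Hs ord_max; under eq_bigr => l _ do rewrite mxE /=.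
move=> H; rewrite (eq_bigr (fun l => mu * (u l * w l))); last by move=> l _; rewrite Hc mulrA.
by rewrite -mulr_sumr H mulr0.
Qed.

Lemma lines_through_le v : normalized v ->
  leq #|[set c : {ffun 'I_3 -> F} | normalized c & \sum_(i < 3) c i * v i == 0]| (#|F| + 1)%N.
Proof.
move=> nv; have [k [vk _]] := normalized_pivot nv.
set S := [set c : {ffun 'I_3 -> F} | _ & _].
have HS : forall c, c \in S -> normalized c /\ \sum_(i < 3) v i * c i = 0.
  move=> c; rewrite inE => /andP[nc /eqP H]; split => //.
  by apply: etrans H; apply: eq_bigr => i _; rewrite mulrC.
have [-> H0] := line_split vk HS.
by apply: leq_add; [exact: max_card | exact: H0].
Qed.

Definition mk3 (x y z : F) : {ffun 'I_3 -> F} := [ffun i => if i == i0 then x else if i == i1 then y else z].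
Lemma mk3_0 x y z : mk3 x y z i0 = x. Proof. by rewrite ffunE. Qed.
Lemma mk3_1 x y z : mk3 x y z i1 = y. Proof. by rewrite ffunE. Qed.
Lemma mk3_2 x y z : mk3 x y z i2 = z. Proof. by rewrite ffunE. Qed.

Definition hpt (s : ((F * F) + (F + unit))%type) : {ffun 'I_3 -> F} :=
  match s with
  | inl (x, y) => mk3 1 x y
  | inr (inl y) => mk3 0 1 y
  | inr (inr _) => mk3 0 0 1
  end.

Lemma hpt_inj : injective hpt.
Proof.
have E x y z x' y' z' : mk3 x y z = mk3 x' y' z' -> [/\ x = x', y = y' & z = z'].
  move=> H; split.
  - by rewrite -(mk3_0 x y z) H mk3_0.
  - by rewrite -(mk3_1 x y z) H mk3_1.
  - by rewrite -(mk3_2 x y z) H mk3_2.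
have n10 : (1 : F) <> 0 by apply/eqP; rewrite oner_eq0.
have n01 : (0 : F) <> 1 by apply/eqP; rewrite eq_sym oner_eq0.
case=> [[x y]|[y|[]]] [[x' y']|[y'|[]]] /= /E [h1 h2 h3] //; subst => //.
Qed.

Lemma hpt_norm s : normalized (hpt s).
Proof.
case: s => [[x y]|[y|[]]] /=; apply/existsP.
- by exists i0; rewrite mk3_0 eqxx /=; apply/forallP => j.
- exists i1; rewrite mk3_1 eqxx /=; apply/forallP.
  by apply: ord3P; rewrite ?mk3_0 ?mk3_1 ?mk3_2 ?eqxx ?implybT.
- exists i2; rewrite mk3_2 eqxx /=; apply/forallP.
  by apply: ord3P; rewrite ?mk3_0 ?mk3_1 ?mk3_2 ?eqxx ?implybT.
Qed.

Lemma lines_ge : (#|F| * #|F| + #|F| + 1 <= #|[set c : {ffun 'I_3 -> F} | normalized c]|)%N.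
Proof.
have -> : (#|F| * #|F| + #|F| + 1 = #|[set: ((F * F) + (F + unit))%type]|)%N.
  by rewrite cardsT card_sum card_prod card_sum card_unit addnA.
rewrite -(card_imset _ hpt_inj); apply: subset_leq_card.
by apply/subsetP => c /imsetP [s _ ->]; rewrite inE hpt_norm.
Qed.
End Count.


Lemma arith (q S1 S2 L N : nat) : (5 <= q)%N -> N = ((q-1)^2)%N ->
  (S2 + (q-3) * (q-1) * L <= (2 * q-4) * S1)%N -> (N * (N-1) + S1 <= S2)%N -> (S1 <= N * (q+1))%N ->
  (q * q+q+1 <= L)%N -> False.
Proof.
move=> q5 HN h1 h2 h3 h4.
have [p Hq] : exists p, q = (p + 5)%N by exists (q - 5)%N; lia.
subst q.
have e1 : (p + 5 - 1 = p + 4)%N by lia.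
have e3 : (p + 5 - 3 = p + 2)%N by lia.
have e4 : (2 * (p + 5) - 4 = (2 * p + 5) + 1)%N by lia.
rewrite e1 e3 e4 in h1; rewrite e1 in HN.
have eN : N = ((p + 4) * (p + 4))%N by rewrite HN expnS expn1.
have eN1 : (N - 1 = (p + 3) * (p + 5))%N.
  have : (N = (p + 3) * (p + 5) + 1)%N by rewrite eN; ring.
  move=> ->; by rewrite addnK.
have h6 : ((p+2) * (p+4) * ((p+5) * (p+5)+(p+5)+1) <= (p+2) * (p+4) * L)%N by apply: leq_mul.
have h7 : ((2 * p+5) * S1 <= (2 * p+5) * (N * (p+5+1)))%N by apply: leq_mul.
rewrite [((_ + 1) * S1)%N]mulnDl mul1n in h1.
have key : (N * (N-1) + (p+2) * (p+4) * ((p+5) * (p+5)+(p+5)+1) <= (2 * p+5) * (N * (p+5+1)))%N by lia.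
rewrite eN1 eN in key.
have E : ((p + 4) * (p+4) * ((p + 3) * (p + 5)) + (p+2) * (p+4) * ((p+5) * (p+5)+(p+5)+1) =
   (2 * p+5) * ((p+4) * (p+4) * (p+5+1)) + 2 * (p+4) * (p+1))%N by ring.
rewrite E in key.
have : (0 < 2 * (p+4) * (p+1))%N by rewrite !muln_gt0 !addn_gt0 orbT.
lia.
Qed.
Lemma arith2 (q l : nat) : (5 <= q)%N -> (q - 3 <= l)%N -> (l <= q - 1)%N ->
  (l * l + (q - 3) * (q - 1) <= (2 * q - 4) * l)%N.
Proof.
move=> q5 h1 h2.
have [p Hq] : exists p, q = (p + 5)%N by exists (q - 5)%N; lia.
subst q.
have e1 : (p + 5 - 1 = p + 4)%N by lia.
have e3 : (p + 5 - 3 = p + 2)%N by lia.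
have e4 : (2 * (p + 5) - 4 = 2 * p + 6)%N by lia.
rewrite e1 e3 e4 in h1 h2 *.
have : (l = p + 2 \/ l = p + 3 \/ l = p + 4)%N by lia.
case=> [->|[->|->]].
- by rewrite -[X in (_ <= X)%N](_ : (p + 2) * (p + 2) + (p + 2) * (p + 4) = (2 * p + 6) * (p + 2))%N //; ring.
- have E : ((2 * p + 6) * (p + 3) = (p + 3) * (p + 3) + (p + 2) * (p + 4) + 1)%N by ring.
  by rewrite E leq_addr.
- by rewrite -[X in (_ <= X)%N](_ : (p + 4) * (p + 4) + (p + 2) * (p + 4) = (2 * p + 6) * (p + 4))%N //; ring.
Qed.

Lemma card_sum_bool (T : finType) (A : {set T}) (p : pred T) :
  #|[set v in A | p v]| = (\sum_(v in A) (p v : nat))%N.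
Proof.
rewrite -sum1_card big_mkcond /= [RHS]big_mkcond /=; apply: eq_bigr => v _.
by rewrite inE; case: (v \in A); case: (p v).
Qed.

Theorem lemma3p13 (F : finFieldType) (P : {mpoly F[3]}) :
  (5 <= #|F|)%N ->
  P != 0 ->
  P \is (#|F| - 1)%N.-homog ->
  no_Fq_linear_components P ->
  Nq P = ((#|F| - 1) ^ 2)%N ->
  (k0 P <= #|F| - 4)%N.
Proof.
move=> q5 _ Hh Hnl HN.
rewrite leqNgt; apply/negP => Hk.
pose e (c v : {ffun 'I_3 -> F}) : bool := \sum_(i < 3) c i * v i == 0.
pose X := curve_pts P.
pose Ls := [set c : {ffun 'I_3 -> F} | normalized c].
have lcE c : line_count P c = (\sum_(v in X) e c v)%N by rewrite /line_count card_sum_bool.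
have Hup (c : {ffun 'I_3 -> F}) : normalized c -> (line_count P c <= #|F| - 1)%N.
  move=> nc; have := key Hh Hnl nc. exact.
have Hlow (c : {ffun 'I_3 -> F}) : normalized c -> (#|F| - 3 <= line_count P c)%N.
  move=> nc; rewrite leqNgt; apply/negP => Hl.
  have Hlt : (line_count P c < k0 P)%N by lia.
  have := before_find 0%N Hlt.
  have Hc := Hup c nc.
  rewrite nth_iota; last by lia.
  rewrite add0n => /negbFE /eqP; rewrite /a_count => /eqP; rewrite cards_eq0 => /eqP /setP /(_ c).
  by rewrite !inE nc eqxx.
set q := #|F|.
set N := #|X|.
have HN' : N = ((q - 1) ^ 2)%N by [].
pose S1 := (\sum_(c in Ls) line_count P c)%N.
pose S2 := (\sum_(c in Ls) line_count P c * line_count P c)%N.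
have h1 : (S2 + (q - 3) * (q - 1) * #|Ls| <= (2 * q - 4) * S1)%N.
  rewrite /S2 /S1 big_distrr /= mulnC -sum_nat_const -big_split /=.
  apply: leq_sum => c; rewrite inE => nc.
  by apply: arith2 => //; [exact: Hlow | exact: Hup].
have h4 : (q * q + q + 1 <= #|Ls|)%N by exact: lines_ge.
have S1E : S1 = (\sum_(v in X) \sum_(c in Ls) e c v)%N.
  by rewrite /S1 (eq_bigr _ (fun c _ => lcE c)) exchange_big.
have h3 : (S1 <= N * (q + 1))%N.
  rewrite S1E -sum_nat_const; apply: leq_sum => v vX.
  have nv : normalized v by move: vX; rewrite inE => /andP[].
  rewrite -card_sum_bool.
  have -> : [set c in Ls | e c v] = [set c | normalized c & \sum_(i < 3) c i * v i == 0].
    by apply/setP => c; rewrite !inE.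
  exact: lines_through_le.
have h2 : (N * (N - 1) + S1 <= S2)%N.
  have S2E : S2 = (\sum_(v in X) \sum_(w in X) \sum_(c in Ls) e c v * e c w)%N.
    rewrite /S2 (eq_bigr (fun c => \sum_(v in X) \sum_(w in X) (e c v * e c w)%N)); last first.
      move=> c _; rewrite lcE big_distrl /=; apply: eq_bigr => v _.
      by rewrite big_distrr.
    rewrite exchange_big /=; apply: eq_bigr => v _.
    by rewrite exchange_big.
  rewrite S2E S1E /N -sum_nat_const -big_split /=.
  apply: leq_sum => v vX.
  rewrite (bigD1 v vX) /= addnC.
  have -> : (\sum_(c in Ls) e c v * e c v = \sum_(c in Ls) e c v)%N.
    by apply: eq_bigr => c _; rewrite mulnb andbb.
  rewrite leq_add2l.
  have -> : (#|X| - 1 = \sum_(w in X | w != v) 1)%N.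
    by rewrite -sum1_card (bigD1 v vX) /= add1n subn1.
  apply: leq_sum => w /andP[wX wv].
  have [c [nc [ev ew]]] := line_through v w.
  rewrite (bigD1 c) ?inE //= /e ev ew eqxx.
  exact: leq_addr.
exact: (arith q5 HN' h1 h2 h3 h4).
Qed.
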